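(* For every $t_1,\dots,t_k\in S$ and $a_i\in\Gamma(t_i)$: (a) $p^{t_1,\dots,t_k}_{a_1,\dots,a_k}\mathcal H_\pi\subset\mathcal H_\pi$ and $p^{t_1,\dots,t_k}_{a_1,\dots,a_k}\mathcal H_\pi^\perp\subset\mathcal H_\pi^\perp$; (b) $p^{t_1,\dots,t_k}_{a_1,\dots,a_k}$ commutes with $p_\pi$; (c) the restriction of $p^{t_1,\dots,t_k}_{a_1,\dots,a_k}$ to $\mathcal H_\pi$ is the projection in $\mathcal H_\pi$ onto the subspace $\mathcal H^{t_1,\dots,t_k}_{a_1,\dots,a_k}\cap\mathcal H_\pi$; (d) for every $\phi\in\mathcal H_\pi$, $p^{t_1,\dots,t_k}_{a_1,\dots,a_k}\phi=p^{t_1}_{a_1}\cdots p^{t_k}_{a_k}\phi$; (e) for every $\phi\in\mathcal H_\pi$ and every $i\in\{1,\dots,k\}$, $$\sum_{a_i\in\Gamma(t_i)}p^{t_1,\dots,t_{i-1},t_i,t_{i+1},\dots,t_k}_{a_1,\dots,a_{i-1},a_i,a_{i+1},\dots,a_k}\phi=p^{t_1,\dots,t_{i-1},t_{i+1},\dots,t_k}_{a_1,\dots,a_{i-1},a_{i+1},\dots,a_k}\phi .$$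
   Context: Let $\mathcal H$ be a complex Hilbert space. A projection is a bounded self-adjoint idempotent operator; $\wedge_\alpha p_\alpha$ is the projection onto the intersection of ranges of the $p_\alpha$. Sums of countably many operators are understood strongly. Let $S$ be a set; for each $t\in S$ let $\Gamma(t)$ be a countable set and for $a\in\Gamma(t)$ let $p^t_a$ be a projection on $\mathcal H$ with range $\mathcal H^t_a$ and $\sum_{a\in\Gamma(t)}p^t_a=I$. Let $\pi=\{p^t_a\}$, $\mathcal H^{t_1,\dots,t_k}_{a_1,\dots,a_k}=\bigcap_i\mathcal H^{t_i}_{a_i}$ and $p^{t_1,\dots,t_k}_{a_1,\dots,a_k}=\wedge_{i=1}^kp^{t_i}_{a_i}$ its projection. $\pi$ commutes on $\phi$ if $W\phi=V\phi$ whenever $W,V$ are finite products of elements of $\pi$ with the same factors (with multiplicity) in possibly different orders; $\mathcal H_\pi$ is the closed subspace of such $\phi$ and $p_\pi$ the projection onto it. *)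

(* Defs.v *)
From Stdlib Require Import ClassicalEpsilon List Permutation.
From mathcomp Require Import all_boot all_algebra.
From mathcomp Require Import reals complex.
Import GRing.Theory Num.Theory.
Set Implicit Arguments. Unset Strict Implicit. Unset Printing Implicit Defensive.
Local Open Scope ring_scope.

Section Hilbert.
Variables (R : realType) (H : lmodType R[i]) (ip : H -> H -> R[i]).

Definition hnorm (x : H) : R[i] := sqrtC (ip x x).

Definition is_inner_product : Prop :=
  [/\ forall (c : R[i]) (x y z : H), ip (c *: x + y) z = c * ip x z + ip y z,
      forall x y : H, ip y x = (ip x y)^*,
      forall x : H, 0 <= ip x x
    & forall x : H, ip x x = 0 -> x = 0].

Definition cauchy_seq (u : nat -> H) : Prop :=
  forall e : R[i], 0 < e -> exists N : nat, forall n m : nat,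
    (N <= n)%N -> (N <= m)%N -> hnorm (u n - u m) < e.

Definition converges_to (u : nat -> H) (l : H) : Prop :=
  forall e : R[i], 0 < e -> exists N : nat, forall n : nat,
    (N <= n)%N -> hnorm (u n - l) < e.

Definition is_hilbert : Prop :=
  is_inner_product /\ forall u, cauchy_seq u -> exists l, converges_to u l.

(* unconditional (strong) convergence of a sum indexed by a countable set *)
Definition has_sum (I : countType) (f : I -> H) (x : H) : Prop :=
  forall e : R[i], 0 < e -> exists s0 : seq I, forall s : seq I,
    uniq s -> {subset s0 <= s} -> hnorm (\sum_(a <- s) f a - x) < e.

Definition bounded_linear (f : H -> H) : Prop :=
  (forall (c : R[i]) (x y : H), f (c *: x + y) = c *: f x + f y) /\
  exists M : R[i], forall x, hnorm (f x) <= M * hnorm x.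

Definition is_projection (p : H -> H) : Prop :=
  [/\ bounded_linear p,
      forall x y, ip (p x) y = ip x (p y)
    & forall x, p (p x) = p x].

Definition range (p : H -> H) (y : H) : Prop := exists x, p x = y.

Definition proj_onto (M : H -> Prop) : H -> H :=
  epsilon (inhabits id)
    (fun q => is_projection q /\ forall y, M y <-> range q y).

Definition meetp (ps : list (H -> H)) : H -> H :=
  proj_onto (fun y => forall q, In q ps -> range q y).

Definition orth (M : H -> Prop) (y : H) : Prop := forall x, M x -> ip y x = 0.

Definition prodop (ws : list (H -> H)) : H -> H := foldr (fun f g => f \o g) id ws.

Definition proj_in (D K : H -> Prop) (f : H -> H) : Prop :=
  [/\ forall x, D x -> D (f x),
      forall x y, D x -> D y -> ip (f x) y = ip x (f y),
      forall x, D x -> f (f x) = f x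
    & forall y, K y <-> exists x, D x /\ f x = y].

Section Family.
Variables (S : Type) (Gamma : S -> countType) (p : forall t, Gamma t -> H -> H).

Definition in_pi (w : H -> H) : Prop := exists t (a : Gamma t), w = p a.

Definition commutes_on (phi : H) : Prop :=
  forall ws vs : list (H -> H), (forall w, In w ws -> in_pi w) ->
    Permutation ws vs -> prodop ws phi = prodop vs phi.

Definition Hpi (phi : H) : Prop := commutes_on phi.

Definition ppi : H -> H := proj_onto Hpi.

(* p^{t_1..t_k}_{a_1..a_k} for ts = [(t_1,a_1);...;(t_k,a_k)] *)
Definition ops (ts : list {t : S & Gamma t}) : list (H -> H) :=
  map (fun x => p (projT2 x)) ts.

Definition pmeet (ts : list {t : S & Gamma t}) : H -> H := meetp (ops ts).

Definition Hmeet (ts : list {t : S & Gamma t}) (y : H) : Prop :=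
  forall q, In q (ops ts) -> range q y.

End Family.
End Hilbert.

(* Main.v *)
Require Import Defs.
From Stdlib Require Import ClassicalEpsilon List Permutation.
From mathcomp Require Import all_boot all_algebra.
From mathcomp Require Import reals complex.
From mathcomp Require Import all_order ring lra.
Import Order.TTheory GRing.Theory Num.Theory.
Set Implicit Arguments. Unset Strict Implicit. Unset Printing Implicit Defensive.
Local Open Scope ring_scope.

Notation CRe := complex.Re.
Notation CIm := complex.Im.
Section Basics.
Variables (R : realType) (H : lmodType R[i]) (ip : H -> H -> R[i]).
Hypothesis hip : is_inner_product ip.

Lemma ipDZ c x y z : ip (c *: x + y) z = c * ip x z + ip y z.
Proof. by case: hip. Qed.
Lemma ipC x y : ip y x = (ip x y)^*.
Proof. by case: hip. Qed.
Lemma ipge0 x : 0 <= ip x x.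
Proof. by case: hip. Qed.
Lemma ip_eq0 x : ip x x = 0 -> x = 0.
Proof. by case: hip => _ _ _; apply. Qed.

Lemma ip0l z : ip 0 z = 0.
Proof.
have := ipDZ 1 0 0 z; rewrite scale1r !addr0 mul1r => h.
by apply: (@addrI _ (ip 0 z)); rewrite addr0 -h.
Qed.
Lemma ipDl x y z : ip (x + y) z = ip x z + ip y z.
Proof. by rewrite -[x]scale1r ipDZ mul1r scale1r. Qed.
Lemma ipZl c x z : ip (c *: x) z = c * ip x z.
Proof. by rewrite -[c *: x]addr0 ipDZ ip0l addr0. Qed.
Lemma ipNl x z : ip (- x) z = - ip x z.
Proof. by rewrite -scaleN1r ipZl mulN1r. Qed.
Lemma ipBl x y z : ip (x - y) z = ip x z - ip y z.
Proof. by rewrite ipDl ipNl. Qed.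
Lemma ip0r z : ip z 0 = 0.
Proof. by rewrite ipC ip0l conjC0. Qed.
Lemma ipDr x y z : ip z (x + y) = ip z x + ip z y.
Proof. by rewrite ipC ipDl rmorphD (ipC x z) (ipC y z). Qed.
Lemma ipZr c x z : ip z (c *: x) = c^* * ip z x.
Proof. by rewrite ipC ipZl rmorphM (ipC x z). Qed.
Lemma ipNr x z : ip z (- x) = - ip z x.
Proof. by rewrite ipC ipNl rmorphN (ipC x z). Qed.
Lemma ipBr x y z : ip z (x - y) = ip z x - ip z y.
Proof. by rewrite ipDr ipNr. Qed.

Definition rip x y : R := CRe (ip x y).
Definition n2 x : R := CRe (ip x x).
Definition nr x : R := Num.sqrt (n2 x).

Lemma ReD (a b : R[i]) : CRe (a + b) = CRe a + CRe b.
Proof. by case: a; case: b. Qed.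
Lemma ReN (a : R[i]) : CRe (- a) = - CRe a.
Proof. by case: a. Qed.
Lemma ReMr (t : R) (a : R[i]) : CRe (t%:C%C * a) = t * CRe a.
Proof. by case: a => a b /=; rewrite mul0r subr0. Qed.
Lemma ReJ (a : R[i]) : CRe (a^*) = CRe a.
Proof. by case: a. Qed.
Lemma conjR (t : R) : (t%:C%C)^* = t%:C%C.
Proof. exact: conjc_real. Qed.

Lemma ipxxE x : ip x x = (n2 x)%:C%C.
Proof.
rewrite /n2; have := ipge0 x; case: (ip x x) => a b h.
by have /= -> := ger0_Im h.
Qed.

Lemma n2_ge0 x : 0 <= n2 x.
Proof. by have := ipge0 x; rewrite ipxxE ler0c. Qed.

Lemma n2_eq0 x : n2 x = 0 -> x = 0.
Proof. by move=> h; apply: ip_eq0; rewrite ipxxE h. Qed.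

Lemma rip_sym x y : rip y x = rip x y.
Proof. by rewrite /rip ipC ReJ. Qed.

Lemma n2_expand a b (t : R) :
  n2 (a + t%:C%C *: b) = n2 a + 2 * t * rip a b + t ^+ 2 * n2 b.
Proof.
rewrite /n2 /rip ipDl !ipDr !ipZl !ipZr conjR !ReD !ReMr.
rewrite -/(rip b a) rip_sym /rip; lra.
Qed.

Lemma n2N x : n2 (- x) = n2 x.
Proof. by rewrite /n2 ipNl ipNr opprK. Qed.

Lemma nr_ge0 x : 0 <= nr x.
Proof. exact: sqrtr_ge0. Qed.
Lemma nr_sq x : nr x ^+ 2 = n2 x.
Proof. by rewrite /nr sqr_sqrtr // n2_ge0. Qed.
Lemma nr_eq0 x : nr x = 0 -> x = 0.
Proof. by move=> h; apply: n2_eq0; rewrite -nr_sq h expr0n. Qed.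
Lemma nrN x : nr (- x) = nr x.
Proof. by rewrite /nr n2N. Qed.
Lemma nrB x y : nr (x - y) = nr (y - x).
Proof. by rewrite -nrN opprB. Qed.

Lemma hnormE x : hnorm ip x = (nr x)%:C%C.
Proof.
rewrite /hnorm ipxxE -nr_sq rmorphXn /= sqrCK //.
by rewrite ler0c nr_ge0.
Qed.

Lemma cs a b : rip a b <= nr a * nr b.
Proof.
have [hb|hb] := eqVneq (n2 b) 0.
  rewrite (n2_eq0 hb) /rip ip0r /=.
  by apply: mulr_ge0; apply: nr_ge0.
have hb0 : 0 < n2 b by rewrite lt0r hb n2_ge0.
pose t := - rip a b / n2 b.
have ht : t * n2 b = - rip a b by rewrite /t mulfVK.
have h := n2_ge0 (a + t%:C%C *: b); rewrite n2_expand in h.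
have h3 : 0 <= (n2 a + 2 * t * rip a b + t ^+ 2 * n2 b) * n2 b.
  by apply: mulr_ge0 => //; exact: ltW.
have e1 : (n2 a + 2 * t * rip a b + t ^+ 2 * n2 b) * n2 b =
   n2 a * n2 b + 2 * rip a b * (t * n2 b) + (t * n2 b) ^+ 2 by ring.
rewrite e1 ht in h3.
have h2 : rip a b ^+ 2 <= n2 a * n2 b by nra.
have hP : (nr a * nr b) ^+ 2 = n2 a * n2 b by rewrite exprMn !nr_sq.
have hP0 : 0 <= nr a * nr b by apply: mulr_ge0; apply: nr_ge0.
move: hP hP0 h2; set P := nr a * nr b; set r := rip a b; nra.
Qed.

Lemma nr_triangle a b : nr (a + b) <= nr a + nr b.
Proof.
have h := n2_expand a b 1; rewrite rmorph1 scale1r in h.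
have := cs a b; have := nr_sq a; have := nr_sq b; have := nr_sq (a + b).
have := nr_ge0 a; have := nr_ge0 b; have := nr_ge0 (a + b).
nra.
Qed.


Definition convR (u : nat -> H) l := forall e : R, 0 < e ->
  exists N, forall n, (N <= n)%N -> nr (u n - l) < e.
Definition cauchyR (u : nat -> H) := forall e : R, 0 < e ->
  exists N, forall n m, (N <= n)%N -> (N <= m)%N -> nr (u n - u m) < e.

Lemma ltC_pos (e : R[i]) : 0 < e -> e = (CRe e)%:C%C /\ 0 < CRe e.
Proof. by case: e => a b; rewrite ltcE /= => /andP[/eqP -> h]. Qed.

Lemma conv_of u l : converges_to ip u l -> convR u l.
Proof.
move=> h e he; have he' : 0 < e%:C%C by rewrite ltcR.
have [N hN] := h _ he'.
by exists N => n hn; have := hN n hn; rewrite hnormE ltcR.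
Qed.

Lemma cauchy_to u : cauchyR u -> cauchy_seq ip u.
Proof.
move=> h e he; have [-> he'] := ltC_pos he; have [N hN] := h _ he'.
by exists N => n m hn hm; rewrite hnormE ltcR; apply: hN.
Qed.

Hypothesis hcomp : forall u, cauchy_seq ip u -> exists l, converges_to ip u l.

Lemma completeR u : cauchyR u -> exists l, convR u l.
Proof.
by move=> /cauchy_to /hcomp [l hl]; exists l; apply: conv_of.
Qed.

Lemma le0_eps (x : R) : (forall e, 0 < e -> x < e) -> x <= 0.
Proof.
move=> h; rewrite leNgt; apply/negP => hx.
have h2 : 0 < x / 2 by lra.
have := h _ h2; lra.
Qed.

Lemma conv_uniq u a b : convR u a -> convR u b -> a = b.
Proof.
move=> ha hb; apply/eqP; rewrite -subr_eq0; apply/eqP; apply: nr_eq0.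
apply/eqP; rewrite eq_le nr_ge0 andbT; apply: le0_eps => e he.
have he2 : 0 < e / 2 by lra.
have [N1 h1] := ha _ he2; have [N2 h2] := hb _ he2.
have := h1 _ (leq_maxl N1 N2); have := h2 _ (leq_maxr N1 N2).
set n := maxn N1 N2.
have : nr (a - b) <= nr (a - u n) + nr (u n - b).
  by move: (nr_triangle (a - u n) (u n - b)); rewrite addrA subrK.
rewrite (nrB a (u n)); lra.
Qed.

Definition contr (f : H -> H) :=
  (forall c x y, f (c *: x + y) = c *: f x + f y) /\ (forall x, nr (f x) <= nr x).

Lemma linB (f : H -> H) : (forall c x y, f (c *: x + y) = c *: f x + f y) ->
  forall x y, f (x - y) = f x - f y.
Proof.
move=> hf x y; have -> : x - y = (-1) *: y + x by rewrite scaleN1r addrC.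
by rewrite hf scaleN1r addrC.
Qed.

Lemma lin0 (f : H -> H) : (forall c x y, f (c *: x + y) = c *: f x + f y) ->
  f 0 = 0.
Proof. by move=> hf; have h := linB hf 0 0; rewrite subrr in h; rewrite subrr in h. Qed.

Lemma conv_contr f u l : contr f -> convR u l -> convR (fun n => f (u n)) (f l).
Proof.
move=> [hl hn] hu e he; have [N hN] := hu e he; exists N => n hnN.
by rewrite -linB //; apply: le_lt_trans (hn _) (hN _ hnN).
Qed.

Section Proj.
Variable q : H -> H.
Hypothesis hq : is_projection ip q.
Lemma proj_lin c x y : q (c *: x + y) = c *: q x + q y.
Proof. by case: hq => [[hl _] _ _]. Qed.
Lemma proj_sa x y : ip (q x) y = ip x (q y).
Proof. by case: hq. Qed.
Lemma proj_idem x : q (q x) = q x.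
Proof. by case: hq. Qed.
Lemma proj_orth x y : ip (q x) (y - q y) = 0.
Proof. by rewrite proj_sa (linB proj_lin) proj_idem subrr ip0r. Qed.
Lemma proj_pyth x : n2 x = n2 (q x) + n2 (x - q x).
Proof.
have := n2_expand (q x) (x - q x) 1.
rewrite rmorph1 scale1r addrC subrK /rip proj_orth /=; lra.
Qed.
Lemma proj_contr : contr q.
Proof.
split; first exact: proj_lin.
move=> x; apply: ler_wsqrtr; rewrite (proj_pyth x).
have := n2_ge0 (x - q x); lra.
Qed.
End Proj.

Lemma contr_prodop ws : (forall w, In w ws -> is_projection ip w) ->
  contr (prodop ws).
Proof.
elim: ws => [|w ws IH] hws /=.
  by split => //; move=> x; rewrite lexx.
have [hl1 hn1] := proj_contr (hws w (or_introl erefl)).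
have [hl2 hn2] := IH (fun v hv => hws v (or_intror hv)).
split.
  by move=> c x y /=; rewrite hl2 hl1.
by move=> x /=; apply: le_trans (hn1 _) (hn2 _).
Qed.


Lemma small_inv (e : R) : 0 < e ->
  exists N, forall n, (N <= n)%N -> (n.+1%:R : R)^-1 < e.
Proof.
move=> he; exists (Num.trunc e^-1) => n hn.
have h1 := truncnS_gt e^-1.
have h2 : ((Num.trunc e^-1).+1%:R : R) <= n.+1%:R by rewrite ler_nat ltnS.
rewrite -[X in _ < X]invrK ltf_pV2 ?posrE ?invr_gt0 ?ltr0Sn //.
exact: lt_le_trans h1 h2.
Qed.

Lemma inv_le1 (n : nat) : 0 < (n.+1%:R : R)^-1 <= 1.
Proof.
rewrite invr_gt0 ltr0Sn /= invr_le1 ?ltr0Sn ?unitfE ?pnatr_eq0 //.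
by rewrite ler1n.
Qed.

Lemma lin_helper (a1 a2 a3 a4 a5 a6 a7 : R) : a7 + a7 = a6 -> a1 <= a2 + a3 ->
  a2 < a5 + a4 -> a4 < a7 -> a3 < a7 -> a1 - a5 < a6.
Proof. lra. Qed.

Definition csub (M : H -> Prop) :=
  [/\ M 0, (forall c x y, M x -> M y -> M (c *: x + y))
    & (forall u l, (forall n, M (u n)) -> convR u l -> M l)].

Lemma rip0_min w z : (forall t : R, n2 w <= n2 (w + t%:C%C *: z)) -> rip w z = 0.
Proof.
move=> h.
pose s := (n2 z + 1)^-1.
have hz := n2_ge0 z.
have hs : 0 < s by rewrite invr_gt0; lra.
have hs1 : s * (n2 z + 1) = 1 by rewrite mulVf //; lra.
have := h (- rip w z * s); rewrite n2_expand.
set r := rip w z; set u := n2 z => h1.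
have h2 : 0 <= r ^+ 2 * s * (s * u - 2).
  have -> : r ^+ 2 * s * (s * u - 2) = 2 * (- r * s) * r + (- r * s) ^+ 2 * u by ring.
  lra.
have h3 : s * u - 2 < 0 by nra.
have h4 : r ^+ 2 * s <= 0.
  by rewrite -(nmulr_rge0 _ h3) mulrC.
have h5 : r ^+ 2 <= 0 by rewrite -(pmulr_rle0 _ hs) mulrC.
nra.
Qed.

Lemma ripI w z : rip w ('i *: z) = CIm (ip w z).
Proof.
rewrite /rip ipZr; case: (ip w z) => a b /=.
rewrite /=; lra.
Qed.

Lemma sq_le (a b : R) : 0 <= a -> 0 <= b -> a <= b -> a ^+ 2 <= b ^+ 2.
Proof. nra. Qed.
Lemma sq_ltc (a b : R) : 0 <= a -> a < b -> a ^+ 2 < b ^+ 2.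
Proof. nra. Qed.
Lemma sq_lt (a b : R) : 0 <= a -> 0 < b -> a ^+ 2 < b ^+ 2 -> a < b.
Proof. nra. Qed.

Lemma proj_exists M : csub M ->
  forall x, exists m, M m /\ forall z, M z -> ip (x - m) z = 0.
Proof.
move=> [M0 MD Mlim] x.
have MS : forall x y, M x -> M y -> M (x + y).
  by move=> a b ha hb; rewrite -[a]scale1r; apply: MD.
have MZ : forall c x, M x -> M (c *: x).
  by move=> c a ha; rewrite -[c *: a]addr0; apply: MD.
pose E := fun r : R => exists m, M m /\ r = nr (x - m).
have hE : classical_sets.nonempty E by exists (nr (x - 0)), 0.
have hlb : forall y, E y -> 0 <= y by move=> y [m [_ ->]]; apply: nr_ge0.
pose d := inf E.
have d_ge0 : 0 <= d by apply: lb_le_inf.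
have d_le : forall m, M m -> d <= nr (x - m).
  move=> m hm; have := @ge_inf _ E; apply; first by exists 0.
  by exists m.
have approx : forall n : nat, exists m, M m /\ nr (x - m) < d + (n.+1%:R : R)^-1.
  move=> n; have : inf E < d + (n.+1%:R : R)^-1 by rewrite ltrDl invr_gt0 ltr0Sn.
  by case/(inf_lt hE) => y [m [hm ->]] hy; exists m.
pose ms n := proj1_sig (constructive_indefinite_description _ (approx n)).
have hms n : M (ms n) /\ nr (x - ms n) < d + (n.+1%:R : R)^-1.
  exact: (proj2_sig (constructive_indefinite_description _ (approx n))).
(* parallelogram estimate *)
have para : forall n k, n2 (ms n - ms k) + 4 * d ^+ 2 <=
    2 * n2 (x - ms n) + 2 * n2 (x - ms k).
  move=> n k.
  set a := x - ms n; set b := x - ms k.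
  pose c := ((2 : R[i])^-1).
  pose v := x - c *: (ms n + ms k).
  have hv : M (c *: (ms n + ms k)) by apply/MZ/MS; [exact: (hms n).1|exact: (hms k).1].
  have hv2 : d ^+ 2 <= n2 v.
    rewrite -nr_sq; apply: sq_le => //; last exact: d_le.
    exact: nr_ge0.
  have e1 := n2_expand a b 1.
  have e2 := n2_expand a b (-1).
  have e3 := n2_expand 0 v 2.
  rewrite rmorph1 scale1r in e1.
  rewrite rmorphN1 scaleN1r in e2.
  have -> : ms n - ms k = - (a - b).
    by rewrite /a /b !opprB [RHS]addrC addrA subrK.
  rewrite n2N.
  have hab : a + b = 0 + (2 : R)%:C%C *: v.
    rewrite add0r /v rmorph_nat scalerBr scalerA /c divff ?pnatr_eq0 //.
    rewrite scale1r scaler_nat mulr2n /a /b opprD addrACA.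
    by [].
  rewrite -hab in e3.
  have h0 : n2 0 = 0 by rewrite /n2 ip0l.
  have r0 : rip 0 v = 0 by rewrite /rip ip0l.
  rewrite h0 r0 in e3.
  lra.
have hcauchy : cauchyR ms.
  move=> eps heps.
  pose K := 8 * d + 4.
  have hK : 0 < K by rewrite /K; lra.
  pose del := eps ^+ 2 / K.
  have hdel : 0 < del by rewrite /del divr_gt0 // exprn_gt0.
  have hdelK : K * del = eps ^+ 2 by rewrite /del mulrC divfK //; lra.
  have [N hN] := small_inv hdel.
  exists N => n k hn hk.
  have bnd : forall j, (N <= j)%N -> n2 (x - ms j) < d ^+ 2 + (2 * d + 1) * del.
    move=> j hj.
    have [_ hj1] := hms j.
    have hj2 := hN j hj.
    have [hj3 hj4] := andP (inv_le1 j).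
    set h := (j.+1%:R)^-1 in hj1 hj2 hj3 hj4.
    have := nr_sq (x - ms j); have := nr_ge0 (x - ms j).
    set y := nr (x - ms j) => hy0 hy.
    rewrite -hy.
    have : y ^+ 2 < (d + h) ^+ 2 by apply: sq_ltc.
    nra.
  have := para n k; have := bnd n hn; have := bnd k hk.
  move=> b1 b2 b3.
  apply: sq_lt => //; first exact: nr_ge0.
  rewrite nr_sq; rewrite /K in hdelK; lra.
have [m hm] := completeR hcauchy.
have Mm : M m by apply: (Mlim ms) => // n; exact: (hms n).1.
have hmd : nr (x - m) <= d.
  rewrite -subr_le0; apply: le0_eps => e he.
  have he2 : 0 < e / 2 by lra.
  have [N1 h1] := hm _ he2.
  have [N2 h2] := small_inv he2.
  have := h1 _ (leq_maxl N1 N2); have := h2 _ (leq_maxr N1 N2).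
  have := (hms (maxn N1 N2)).2.
  set n := maxn N1 N2.
  have : nr (x - m) <= nr (x - ms n) + nr (ms n - m).
    by move: (nr_triangle (x - ms n) (ms n - m)); rewrite addrA subrK.
  have he3 : e / 2 + e / 2 = e by lra.
  move=> z1 z2 z3 z4; exact: (lin_helper he3 z1 z2 z3 z4).
exists m; split => // z hz.
have key : forall z, M z -> rip (x - m) z = 0.
  move=> y hy; apply: rip0_min => t.
  have hM : M ((- t)%:C%C *: y + m) by apply: MD.
  have e : x - ((- t)%:C%C *: y + m) = x - m + t%:C%C *: y.
    by rewrite rmorphN scaleNr opprD opprK addrCA addrC.
  rewrite -e -!nr_sq; apply: sq_le; try exact: nr_ge0.
  exact: le_trans hmd (d_le _ hM).
have k1 := key z hz.
have k2 := key _ (MZ 'i z hz).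
rewrite ripI in k2.
move: k1; rewrite /rip; case: (ip (x - m) z) k2 => a b /= -> ->.
by [].
Qed.

Lemma proj_uniq M : csub M -> forall x m1 m2, M m1 ->
  (forall z, M z -> ip (x - m1) z = 0) -> M m2 ->
  (forall z, M z -> ip (x - m2) z = 0) -> m1 = m2.
Proof.
move=> [M0 MD Mlim] x m1 m2 h1 o1 h2 o2.
have hd : M (m1 - m2).
  by rewrite addrC -scaleN1r; apply: MD.
have e : m1 - m2 = (x - m2) - (x - m1) by rewrite opprB [RHS]addrC addrA subrK.
apply/eqP; rewrite -subr_eq0; apply/eqP; apply: ip_eq0.
by rewrite {1}e ipBl o1 // o2 // subrr.
Qed.

Lemma proj_exists2 M : csub M ->
  exists q, is_projection ip q /\ forall y, M y <-> range q y.
Proof.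
move=> hM; have hex := proj_exists hM.
pose q x := proj1_sig (constructive_indefinite_description _ (hex x)).
have hq x : M (q x) /\ forall z, M z -> ip (x - q x) z = 0.
  exact: (proj2_sig (constructive_indefinite_description _ (hex x))).
have uq := proj_uniq hM.
have [M0 MD Mlim] := hM.
have qfix : forall y, M y -> q y = y.
  move=> y hy; apply: (uq y (q y) y (hq y).1 (hq y).2 hy).
  by move=> z _; rewrite subrr ip0l.
have qlin : forall c x y, q (c *: x + y) = c *: q x + q y.
  move=> c x y; apply: (uq (c *: x + y) _ _ (hq _).1 (hq _).2).
    by apply: MD; [exact: (hq x).1 | exact: (hq y).1].
  move=> z hz.
  have -> : c *: x + y - (c *: q x + q y) = c *: (x - q x) + (y - q y).
    by rewrite scalerBr opprD addrACA.
  by rewrite ipDZ (hq x).2 // (hq y).2 // mulr0 addr0.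
have orth2 : forall x y, ip (q x) (y - q y) = 0.
  by move=> x y; rewrite ipC (hq y).2 ?conjC0 //; exact: (hq x).1.
have sa : forall x y, ip (q x) y = ip x (q y).
  move=> x y.
  have e1 : ip (q x) y = ip (q x) (y - q y) + ip (q x) (q y) by rewrite -ipDr subrK.
  have e2 : ip x (q y) = ip (x - q x) (q y) + ip (q x) (q y) by rewrite -ipDl subrK.
  by rewrite e1 e2 orth2 (hq x).2 //; exact: (hq y).1.
exists q; split; last first.
  move=> y; split => [hy|[x <-]]; last exact: (hq x).1.
  by exists y; rewrite qfix.
split => //.
- split; first exact: qlin.
  exists 1 => x; rewrite mul1r !hnormE lecR.
  apply: ler_wsqrtr.
  have := n2_expand (q x) (x - q x) 1.
  rewrite rmorph1 scale1r addrC subrK /rip orth2 /=.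
  have := n2_ge0 (x - q x); lra.
- by move=> x; apply: qfix; exact: (hq x).1.
Qed.

Lemma proj_onto_spec M : csub M ->
  is_projection ip (proj_onto ip M) /\ forall y, M y <-> range (proj_onto ip M) y.
Proof.
move=> hM; exact: (epsilon_spec (inhabits (@id H))
  (fun q => is_projection ip q /\ forall y, M y <-> range q y) (proj_exists2 hM)).
Qed.

Section PO.
Variable M : H -> Prop.
Hypothesis hM : csub M.
Let P := proj_onto ip M.
Lemma PO_proj : is_projection ip P.
Proof. exact: (proj_onto_spec hM).1. Qed.
Lemma PO_M x : M (P x).
Proof. by apply/(proj_onto_spec hM).2; exists x. Qed.
Lemma PO_fix y : M y -> P y = y.
Proof.
move=> /(proj_onto_spec hM).2 [x <-]; exact: (proj_idem PO_proj).
Qed.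
Lemma PO_orth x z : M z -> ip (x - P x) z = 0.
Proof.
move=> hz; rewrite -(PO_fix hz) -(proj_sa PO_proj).
by rewrite (linB (proj_lin PO_proj)) (proj_idem PO_proj) subrr ip0l.
Qed.
Lemma PO_uniq x m : M m -> (forall z, M z -> ip (x - m) z = 0) -> P x = m.
Proof.
move=> hm hom; apply: (proj_uniq hM (x := x)) => //.
  exact: PO_M.
exact: PO_orth.
Qed.
End PO.

Lemma conv_ext u v l : (forall n, u n = v n) -> convR u l -> convR v l.
Proof.
move=> huv hu e he; have [N hN] := hu e he; exists N => n hn.
by rewrite -huv; apply: hN.
Qed.

Lemma prodop_app (ws vs : list (H -> H)) x :
  prodop (ws ++ vs) x = prodop ws (prodop vs x).
Proof. by elim: ws => [|w ws IH] //=; rewrite IH. Qed.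

Lemma range_fix q y : is_projection ip q -> (range q y <-> q y = y).
Proof.
move=> hq; split => [[x <-]|h]; first exact: (proj_idem hq).
by exists y.
Qed.

Section Family.
Variables (S : Type) (Gamma : S -> countType) (p : forall t, Gamma t -> H -> H).
Hypothesis hproj : forall t (a : Gamma t), is_projection ip (@p t a).

Lemma pi_proj w : in_pi p w -> is_projection ip w.
Proof. by case=> t [a ->]. Qed.

Lemma ops_pi ts w : In w (ops p ts) -> in_pi p w.
Proof.
by case/in_map_iff => x [<- _]; exists (projT1 x), (projT2 x).
Qed.

Lemma allpi_proj ws : (forall w, In w ws -> in_pi p w) ->
  forall w, In w ws -> is_projection ip w.
Proof. by move=> h w hw; apply: pi_proj; apply: h. Qed.

Lemma Hp_w w phi : in_pi p w -> Hpi p phi -> Hpi p (w phi).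
Proof.
move=> hw hphi; rewrite /Hpi /commutes_on => ws vs hws hperm.
have -> : prodop ws (w phi) = prodop (ws ++ [:: w]) phi by rewrite prodop_app.
have -> : prodop vs (w phi) = prodop (vs ++ [:: w]) phi by rewrite prodop_app.
apply: hphi; last exact: Permutation_app_tail.
move=> v hv; case: (in_app_or _ _ _ hv) => [hv'|[<-|[]]]; [exact: hws | exact: hw].
Qed.

Lemma Hp_prodop ws phi : (forall w, In w ws -> in_pi p w) -> Hpi p phi ->
  Hpi p (prodop ws phi).
Proof.
elim: ws => [|w ws IH] hws hphi //=.
apply: Hp_w; first exact: hws (or_introl erefl).
by apply: IH => // v hv; apply: hws; right.
Qed.

Lemma Hp_csub : csub (Hpi p).
Proof.
have hc : forall ws vs, (forall w, In w ws -> in_pi p w) -> Permutation ws vs ->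
    contr (prodop ws) /\ contr (prodop vs).
  move=> ws vs hws hp; split; apply: contr_prodop; apply: allpi_proj => // w hw.
  by apply: hws; apply: Permutation_in hw; apply: Permutation_sym.
split.
- rewrite /Hpi /commutes_on => ws vs hws hp; have [[l1 _] [l2 _]] := hc ws vs hws hp.
  by rewrite !lin0.
- move=> c x y hx hy; rewrite /Hpi /commutes_on => ws vs hws hp; have [[l1 _] [l2 _]] := hc ws vs hws hp.
  by rewrite l1 l2 (hx ws vs) // (hy ws vs).
- move=> u l hu hl; rewrite /Hpi /commutes_on => ws vs hws hp; have [c1 c2] := hc ws vs hws hp.
  have h1 := conv_contr c1 hl.
  have h2 := conv_contr c2 hl.
  apply: conv_uniq h1 _.
  by apply: conv_ext h2 => n; rewrite (hu n ws vs).
Qed.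

Lemma Hmeet_fix ts y : Hmeet p ts y <-> forall q, In q (ops p ts) -> q y = y.
Proof.
split => h q hq; have hq' := pi_proj (ops_pi hq).
  by apply/(range_fix _ hq'); apply: h.
by apply/(range_fix _ hq'); apply: h.
Qed.

Lemma Hmeet_csub ts : csub (Hmeet p ts).
Proof.
split.
- apply/Hmeet_fix => q hq; exact: lin0 (proj_lin (pi_proj (ops_pi hq))).
- move=> c x y /Hmeet_fix hx /Hmeet_fix hy; apply/Hmeet_fix => q hq.
  by rewrite (proj_lin (pi_proj (ops_pi hq))) hx // hy.
- move=> u l hu hl; apply/Hmeet_fix => q hq.
  have hq' := pi_proj (ops_pi hq).
  have h1 := conv_contr (proj_contr hq') hl.
  apply: conv_uniq h1 _.
  by apply: conv_ext hl => n; rewrite (proj1 (Hmeet_fix ts (u n)) (hu n)).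
Qed.

Lemma ip_prodop_fix ws v z : (forall q, In q ws -> is_projection ip q /\ q z = z) ->
  ip (prodop ws v) z = ip v z.
Proof.
elim: ws v => [|w ws IH] v hws //=.
have [hw1 hw2] := hws w (or_introl erefl).
rewrite (proj_sa hw1) hw2; apply: IH => q hq; apply: hws; by right.
Qed.

Lemma pmeet_prod ts phi : Hpi p phi -> pmeet ip p ts phi = prodop (ops p ts) phi.
Proof.
move=> hphi.
have -> : pmeet ip p ts = proj_onto ip (Hmeet p ts) by [].
apply: PO_uniq; first exact: Hmeet_csub.
- move=> q hq; have [l1 [l2 e]] := in_split _ _ hq.
  have hp : Permutation (ops p ts) (q :: l1 ++ l2).
    by rewrite e; apply: Permutation_sym; apply: Permutation_middle.
  exists (prodop (l1 ++ l2) phi).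
  by rewrite (hphi _ _ (@ops_pi ts) hp).
- move=> z /Hmeet_fix hz.
  rewrite ipBl ip_prodop_fix ?subrr // => q hq; split; last exact: hz.
  exact: pi_proj (ops_pi hq).
Qed.

End Family.
End Basics.

From Stdlib Require Import FunctionalExtensionality.

Lemma perm_mid (A : Type) (s1 s2 : seq A) x :
  Permutation (s1 ++ x :: s2) (x :: s1 ++ s2).
Proof.
elim: s1 => [|y s1 IH] /=; first exact: Permutation_refl.
exact: Permutation_trans (Permutation.perm_skip y IH) (Permutation.perm_swap x y _).
Qed.

Unset Implicit Arguments.
Set Strict Implicit.

Theorem proposition2 (R : realType) (H : lmodType R[i]) (ip : H -> H -> R[i])
  (S : Type) (Gamma : S -> countType) (p : forall t, Gamma t -> H -> H)
  (hH : is_hilbert ip)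
  (hproj : forall t (a : Gamma t), is_projection ip (p t a))
  (hsum : forall t (x : H), has_sum ip (fun a : Gamma t => p t a x) x)
  (ts : list {t : S & Gamma t}) (hk : (0 < size ts)%N) :
  let P := pmeet ip p ts in
  let Hp := Hpi p in
  let pp := ppi ip p in
  [/\ (forall phi, Hp phi -> Hp (P phi)) /\
        (forall psi, orth ip Hp psi -> orth ip Hp (P psi)),
      forall x, P (pp x) = pp (P x),
      proj_in ip Hp (fun y => Hmeet p ts y /\ Hp y) P,
      forall phi, Hp phi -> P phi = prodop (ops p ts) phi
    & forall (l r : list {t : S & Gamma t}) (t : S) (a : Gamma t),
        ts = l ++ existT _ t a :: r ->
        forall phi, Hp phi ->
          has_sum ip (fun b : Gamma t => pmeet ip p (l ++ existT _ t b :: r) phi)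
                     (pmeet ip p (l ++ r) phi)].
Proof.
move=> P Hp pp.
have [hip hcomp] := hH.
have Hcs : csub ip (Hpi p) := Hp_csub hip hproj.
have Mcs : csub ip (Hmeet p ts) := Hmeet_csub hip hproj ts.
have ePm : P = proj_onto ip (Hmeet p ts) by [].
have Pproj : is_projection ip P by rewrite ePm; exact: (PO_proj hip hcomp Mcs).
have hd : forall ts' phi, Hpi p phi -> pmeet ip p ts' phi = prodop (ops p ts') phi.
  by move=> ts' phi; apply: (pmeet_prod hip hcomp hproj).
have a1 : forall phi, Hp phi -> Hp (P phi).
  move=> phi hphi; rewrite /P (hd ts phi hphi); apply: Hp_prodop => //.
  exact: ops_pi.
have a2 : forall psi, orth ip Hp psi -> orth ip Hp (P psi).
  by move=> psi hpsi x hx; rewrite (proj_sa Pproj); apply: hpsi; apply: a1.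
have hb : forall x, P (pp x) = pp (P x).
  move=> x; symmetry; apply: (PO_uniq hip hcomp Hcs).
    by apply: a1; exact: (PO_M hip hcomp Hcs x).
  move=> z hz; rewrite -(linB (proj_lin Pproj)) (proj_sa Pproj).
  exact: (PO_orth hip hcomp Hcs x (a1 z hz)).
split.
- by split; [exact: a1 | exact: a2].
- exact: hb.
- split.
  + exact: a1.
  + by move=> x y _ _; exact: (proj_sa Pproj).
  + by move=> x _; exact: (proj_idem Pproj).
  + move=> y; split.
      move=> [hy1 hy2]; exists y; split => //.
      by rewrite ePm; exact: (PO_fix hip hcomp Mcs hy1).
    move=> [x [hx <-]]; split; last exact: a1.
    by rewrite ePm; exact: (PO_M hip hcomp Mcs x).
- by move=> phi hphi; exact: hd.
- move=> l r t a _ phi hphi.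
  set y := pmeet ip p (l ++ r) phi.
  have fe : (fun b : Gamma t => pmeet ip p (l ++ existT _ t b :: r) phi) =
            (fun bb => p t bb y).
    apply: functional_extensionality => bb.
    rewrite (hd _ _ hphi) /y (hd _ _ hphi).
    have hperm : Permutation (ops p (l ++ existT _ t bb :: r)) (p t bb :: ops p (l ++ r)).
      by rewrite /ops !map_cat /=; apply: perm_mid.
    by rewrite (hphi _ _ (@ops_pi _ _ _ _ p _) hperm).
  by rewrite fe; apply: hsum.
Qed.
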